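(* Let $n=2m$ with $m$ a positive integer, and let $\mathbf{x}_n=(1,\dots,1)\in\mathbb{R}^n$. Then $$E(\mathbf{x}_n)\le m(1+\ln m),$$ where $E$ is as defined in the context.
   Context: For $\mathbf{x}=(x_1,\dots,x_n)\in(0,\infty)^n$, let $\mathcal{C}(\mathbf{x})$ be the configuration of $n+1$ points $P_1<\dots<P_{n+1}$ on $\mathbb{R}$ with $P_1=0$ and $P_{i+1}=P_i+x_i$, where $P_i$ is red if $i$ is odd and blue if $i$ is even. A matching $\mathcal{M}$ of this configuration is produced by the algorithm which repeatedly selects, among all pairs consisting of an unmatched blue point and an unmatched red point, a pair at minimum distance and matches them, until no further matching is possible; ties are broken at random. $D(\mathbf{x})$ is the expected value of $\sum_{P\text{ blue}}|P-\mathcal{M}(P)|$ with respect to the randomness of the algorithm. For a permutation $\pi$ of $\{1,\dots,n\}$ write $\pi(\mathbf{x})=(x_{\pi(1)},\dots,x_{\pi(n)})$, and $E(\mathbf{x})=\frac{1}{n!}\sum_\pi D(\pi(\mathbf{x}))$. *)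

(* Defs.v *)
From HB Require Import structures.
From mathcomp Require Import all_boot all_order all_algebra all_fingroup.
From mathcomp Require Import all_classical all_reals all_analysis.
Set Implicit Arguments. Unset Strict Implicit. Unset Printing Implicit Defensive.
Import Order.TTheory GRing.Theory Num.Theory.
Local Open Scope ring_scope.

Section Matching.
Variable R : realType.
Variable n : nat.

(* Points P_1 < ... < P_{n+1} are indexed 0-based by k : 'I_n.+1;
   P_{k+1} = x_1 + ... + x_k.  0-based index k is red iff k is even
   (i.e. 1-based index k+1 odd), blue iff k is odd. *)
Definition pos (x : 'I_n -> R) (k : 'I_n.+1) : R :=
  \sum_(i < n | (i < k)%N) x i.

Definition is_blue (k : 'I_n.+1) : bool := odd k.
Definition is_red (k : 'I_n.+1) : bool := ~~ odd k.

Definition pdist (x : 'I_n -> R) (p : 'I_n.+1 * 'I_n.+1) : R :=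
  `|pos x p.1 - pos x p.2|.

Definition cand (S : {set 'I_n.+1}) : {set 'I_n.+1 * 'I_n.+1} :=
  [set p | [&& p.1 \in S, p.2 \in S, is_blue p.1 & is_red p.2]].

Definition minpairs (x : 'I_n -> R) (S : {set 'I_n.+1}) :
  {set 'I_n.+1 * 'I_n.+1} :=
  [set p in cand S | [forall q in cand S, pdist x p <= pdist x q]].

(* Expected remaining cost of the greedy algorithm from the set S of
   unmatched points, ties broken uniformly at random; [fuel] bounds the
   number of remaining steps. *)
Fixpoint Dfuel (x : 'I_n -> R) (fuel : nat) (S : {set 'I_n.+1}) : R :=
  match fuel with
  | 0 => 0
  | f.+1 =>
    if #|minpairs x S| == 0%N then 0
    else (#|minpairs x S|%:R)^-1 *
         \sum_(p in minpairs x S) (pdist x p + Dfuel x f (S :\ p.1 :\ p.2))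
  end.

(* D(x): each step removes two points, so n.+1 steps always suffice. *)
Definition D (x : 'I_n -> R) : R := Dfuel x n.+1 [set: 'I_n.+1].

Definition E (x : 'I_n -> R) : R :=
  (n`!%:R)^-1 * \sum_(s : 'S_n) D (fun i => x (s i)).

End Matching.

(* Main.v *)
Require Import Defs.
From HB Require Import structures.
From mathcomp Require Import all_boot all_order all_algebra all_fingroup.
From mathcomp Require Import all_classical all_reals all_analysis.
From mathcomp Require Import zify lra.
Import Order.TTheory GRing.Theory Num.Theory.
Set Implicit Arguments. Unset Strict Implicit. Unset Printing Implicit Defensive.

Ltac li := repeat match goal with
  | H : forall _ : ?T, _ |- _ =>
      let s := type of T in
      lazymatch s with Prop => fail | _ => clear H end
  end; lia.

Section Comb.
Variable n : nat.
Implicit Types S : {set 'I_n.+1}.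

Definition dn (a b : nat) := ((a - b) + (b - a))%N.

Definition AltInv S : Prop :=
 (forall b1 b2 : 'I_n.+1, b1 \in S -> b2 \in S -> odd b1 -> odd b2 -> (b1 < b2)%N ->
    exists r : 'I_n.+1, [/\ r \in S, ~~ odd r, (b1 < r)%N & (r < b2)%N]) /\
 (forall b : 'I_n.+1, b \in S -> odd b -> exists r : 'I_n.+1, [/\ r \in S, ~~ odd r & (r < b)%N]) /\
 (forall b : 'I_n.+1, b \in S -> odd b -> exists r : 'I_n.+1, [/\ r \in S, ~~ odd r & (b < r)%N]).

Definition minc S (p : 'I_n.+1 * 'I_n.+1) :=
  p \in cand S /\ forall q, q \in cand S -> (dn p.1 p.2 <= dn q.1 q.2)%N.

Lemma candP S (b r : 'I_n.+1) :
  ((b, r) \in cand S) = [&& b \in S, r \in S, odd b & ~~ odd r].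
Proof. by rewrite /cand inE. Qed.

Lemma neqp (a b : nat) : odd a -> ~~ odd b -> a != b.
Proof. by move=> ha hb; apply/eqP => e; move: hb; rewrite -e ha. Qed.

Lemma between S b0 r0 c : AltInv S -> minc S (b0, r0) -> c \in S ->
  ~ ((b0 < c)%N /\ (c < r0)%N) /\ ~ ((r0 < c)%N /\ (c < b0)%N).
Proof.
move=> [Ia [Ib Ic]] [pc pm] cS; rewrite candP in pc.
case/and4P: pc => b0S r0S ob0 er0.
case oc: (odd c).
- split=> -[h1 h2].
  + have [r [rS er h3 h4]] := Ia b0 c b0S cS ob0 oc h1.
    have := pm (b0, r); rewrite candP b0S rS ob0 er /= => /(_ isT); rewrite /dn; li.
  + have [r [rS er h3 h4]] := Ia c b0 cS b0S oc ob0 h2.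
    have := pm (b0, r); rewrite candP b0S rS ob0 er /= => /(_ isT); rewrite /dn; li.
- split=> -[h1 h2]; have := pm (b0, c); rewrite candP b0S cS ob0 oc /= => /(_ isT);
  rewrite /dn; li.
Qed.

Lemma memD S (b0 r0 r : 'I_n.+1) : r \in S -> (r : nat) != b0 -> (r : nat) != r0 ->
  r \in S :\ b0 :\ r0.
Proof. by move=> rS h1 h2; rewrite !in_setD1 -!val_eqE /= h1 h2 rS. Qed.

Lemma inv_step S b0 r0 : AltInv S -> minc S (b0, r0) -> AltInv (S :\ b0 :\ r0).
Proof.
move=> I M; have bt := between I M.
move: I M => [Ia [Ib Ic]] [pc pm]; rewrite candP in pc.
case/and4P: pc => b0S r0S ob0 er0.
have nbr := neqp ob0 er0.
split; [|split].
- move=> b1 b2; rewrite !in_setD1 -!val_eqE /= => /and3P[n1r n1b b1S] /and3P[n2r n2b b2S] o1 o2 lt.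
  have [r [rS er h1 h2]] := Ia b1 b2 b1S b2S o1 o2 lt.
  case: (eqVneq (r : nat) r0) => [Er|Nr].
  + case: (ltnP b0 r0) => hbr.
    * have [hb1 _] := bt b1 b1S.
      have lt1 : (b1 < b0)%N by li.
      have [r' [r'S er' h1' h2']] := Ia b1 b0 b1S b0S o1 ob0 lt1.
      exists r'; split; [|by []|li|li].
      by apply: memD => //; [rewrite eq_sym; apply: neqp | li].
    * have [_ hb2] := bt b2 b2S.
      have lt1 : (b0 < b2)%N by li.
      have [r' [r'S er' h1' h2']] := Ia b0 b2 b0S b2S ob0 o2 lt1.
      exists r'; split; [|by []|li|li].
      by apply: memD => //; [rewrite eq_sym; apply: neqp | li].
  + exists r; split => //; apply: memD => //; by rewrite eq_sym; apply: neqp.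
- move=> b; rewrite !in_setD1 -!val_eqE /= => /and3P[n1r n1b bS] ob.
  have [r [rS er h1]] := Ib b bS ob.
  case: (eqVneq (r : nat) r0) => [Er|Nr].
  + case: (ltnP b0 r0) => hbr.
    * have [r' [r'S er' h1']] := Ib b0 b0S ob0.
      exists r'; split; [|by []|li].
      by apply: memD => //; [rewrite eq_sym; apply: neqp | li].
    * have [_ hb2] := bt b bS.
      have lt1 : (b0 < b)%N by li.
      have [r' [r'S er' h1' h2']] := Ia b0 b b0S bS ob0 ob lt1.
      exists r'; split; [|by []|li].
      by apply: memD => //; [rewrite eq_sym; apply: neqp | li].
  + exists r; split => //; apply: memD => //; by rewrite eq_sym; apply: neqp.
- move=> b; rewrite !in_setD1 -!val_eqE /= => /and3P[n1r n1b bS] ob.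
  have [r [rS er h1]] := Ic b bS ob.
  case: (eqVneq (r : nat) r0) => [Er|Nr].
  + case: (ltnP b0 r0) => hbr.
    * have [hb1 _] := bt b bS.
      have lt1 : (b < b0)%N by li.
      have [r' [r'S er' h1' h2']] := Ia b b0 bS b0S ob ob0 lt1.
      exists r'; split; [|by []|li].
      by apply: memD => //; [rewrite eq_sym; apply: neqp | li].
    * have [r' [r'S er' h1']] := Ic b0 b0S ob0.
      exists r'; split; [|by []|li].
      by apply: memD => //; [rewrite eq_sym; apply: neqp | li].
  + exists r; split => //; apply: memD => //; by rewrite eq_sym; apply: neqp.
Qed.

Definition Q S (b : 'I_n.+1) (k : nat) : bool :=
  [forall r : 'I_n.+1, ((r \in S) && ~~ odd r) ==>
     (((k < r) ==> (b < r)) && ((r <= k) ==> (r < b)))%N].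

Lemma gap S b0 r0 : AltInv S -> minc S (b0, r0) ->
  (2 * dn b0 r0 * #|[set b in S | odd b]| <= n)%N.
Proof.
move=> I M; move: (I) M => [Ia [Ib Ic]] [pc pm]; rewrite candP in pc.
rewrite /= in pm.
case/and4P: pc => b0S r0S ob0 er0.
set d := dn b0 r0.
set Bl := [set b in S | odd b].
have A : forall b : 'I_n.+1, b \in S -> odd b -> (2 * d <= \sum_(0 <= k < n) Q S b k)%N.
  move=> b bS ob.
  have [rl [rlS erl hl]] := Ib b bS ob.
  have [rr [rrS err hr]] := Ic b bS ob.
  have := pm (b, rl); rewrite candP bS rlS ob erl /= => /(_ isT) dl.
  have := pm (b, rr); rewrite candP bS rrS ob err /= => /(_ isT) dr.
  rewrite -/d in dl dr.
  have rrn : (rr <= n)%N by rewrite -ltnS ltn_ord.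
  rewrite (@big_cat_nat _ _ _ (b - d)) /=; [|li|rewrite /dn in dl dr; li].
  rewrite (@big_cat_nat _ _ _ (b + d) (b - d)) /=; [|li|rewrite /dn in dl dr; li].
  rewrite (@eq_big_nat _ _ _ (b - d) (b + d) _ (fun _ => 1%N)); last first.
    move=> k /andP[k1 k2].
    have -> : Q S b k; last by [].
    apply/forallP => r; apply/implyP => /andP[rS er].
    have := pm (b, r); rewrite candP bS rS ob er /= => /(_ isT) dd; rewrite -/d in dd.
    rewrite /dn in dd dl dr.
    apply/andP; split; apply/implyP => h; li.
  rewrite sum_nat_const_nat; rewrite /dn in dl dr; li.
have B : forall k, (\sum_(b in Bl) Q S b k <= 1)%N.
  move=> k.
  case: (pickP (fun b => (b \in Bl) && Q S b k)) => [c /andP[cB qc]|none].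
    rewrite (bigD1 c) //= qc big1 // => b /andP[bB ne].
    case qb: (Q S b k) => //.
    exfalso.
    move: cB bB; rewrite !inE => /andP[cS oc] /andP[bS ob].
    have ne' : (b : nat) != c by rewrite val_eqE.
    have [lt|lt] : (b < c)%N \/ (c < b)%N by li.
    + have [r [rS er h1 h2]] := Ia b c bS cS ob oc lt.
      move/forallP: qb => /(_ r); rewrite rS er /= => /andP[q1 q2].
      move/forallP: qc => /(_ r); rewrite rS er /= => /andP[q3 q4].
      move: q1 q2 q3 q4; case: (ltnP k r) => hk /=; li.
    + have [r [rS er h1 h2]] := Ia c b cS bS oc ob lt.
      move/forallP: qb => /(_ r); rewrite rS er /= => /andP[q1 q2].
      move/forallP: qc => /(_ r); rewrite rS er /= => /andP[q3 q4].
      move: q1 q2 q3 q4; case: (ltnP k r) => hk /=; li.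
  rewrite big1 // => b bB; have := none b; rewrite bB /= => ->; by [].
have -> : (2 * d * #|Bl| = \sum_(b in Bl) 2 * d)%N by rewrite sum_nat_const mulnC.
apply: (@leq_trans (\sum_(b in Bl) \sum_(0 <= k < n) Q S b k)%N).
  apply: leq_sum => b; rewrite inE => /andP[bS ob]; exact: A.
rewrite exchange_big /=.
apply: (@leq_trans (\sum_(0 <= k < n) 1)%N); first by apply: leq_sum => k _; exact: B.
by rewrite sum_nat_const_nat; li.
Qed.

Lemma inv_init : ~~ odd n -> AltInv [set: 'I_n.+1].
Proof.
move=> en.
have oh : forall b : nat, odd b -> b = (b./2 * 2).+1.
  by move=> b ob; rewrite -[LHS]odd_double_half ob -muln2.
have eh : ~~ odd n -> n = (n./2 * 2)%N.
  by move=> h; rewrite -[LHS]odd_double_half (negbTE h) -muln2.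
split; [|split].
- move=> b1 b2 _ _ o1 o2 lt.
  have e1 := oh _ o1; have e2 := oh _ o2.
  have hb2 : (b2 < n.+1)%N := ltn_ord b2.
  exists (inord b1.+1); rewrite inordK; last by li.
  split; [by rewrite inE | by rewrite /= o1 | li | li].
- move=> b _ ob; have e1 := oh _ ob.
  have hb : (b < n.+1)%N := ltn_ord b.
  exists (inord b.-1); rewrite inordK; last by li.
  split; [by rewrite inE | by case: (nat_of_ord b) ob | li].
- move=> b _ ob; have e1 := oh _ ob; have e2 := eh en.
  have hb : (b < n.+1)%N := ltn_ord b.
  exists (inord b.+1); rewrite inordK; last by li.
  split; [by rewrite inE | by rewrite /= ob | li].
Qed.

End Comb.

Local Open Scope ring_scope.

Section Real.
Variable R : realType.
Variable n : nat.
Let x1 := fun _ : 'I_n => (1 : R).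

Lemma pos1 (k : 'I_n.+1) : pos x1 k = (k : nat)%:R.
Proof.
rewrite /pos (eq_bigl (fun i : 'I_n => xpredT i && (i < k)%N)) //.
rewrite -(big_ord_widen_cond (op := +%R) (idx := 0 : R) n xpredT (fun _ => 1)); last first.
  by rewrite -ltnS ltn_ord.
by rewrite sumr_const card_ord.
Qed.

Lemma natdist (a b : nat) : `|(a%:R : R) - b%:R| = (dn a b)%:R.
Proof.
rewrite /dn; have [h|h] := leqP a b.
  have -> : (a - b = 0)%N by apply/eqP; rewrite subn_eq0.
  by rewrite add0n distrC natrB // ger0_norm // subr_ge0 ler_nat.
have -> : (b - a = 0)%N by apply/eqP; rewrite subn_eq0 ltnW.
have hl := ltnW h.
by rewrite addn0 natrB // ger0_norm // subr_ge0 ler_nat.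
Qed.

Lemma pdist1 p : pdist x1 p = (dn p.1 p.2)%:R.
Proof. by rewrite /pdist !pos1 natdist. Qed.

Definition Hs (j : nat) : R := \sum_(i < j) (i.+1%:R)^-1.

Lemma Hs_ge0 j : 0 <= Hs j.
Proof. by apply: sumr_ge0 => i _; rewrite invr_ge0 ler0n. Qed.

Lemma main f (S : {set 'I_n.+1}) : AltInv S ->
  Dfuel x1 f S <= n%:R / 2 * Hs #|[set b in S | odd b]|.
Proof.
elim: f S => [|f IH] S IS.
  rewrite [Dfuel _ _ _]/=.
  by apply: mulr_ge0; [apply: divr_ge0 | apply: Hs_ge0].
rewrite [Dfuel _ _ _]/=.
case: ifP => [_|hc]; first by apply: mulr_ge0; [apply: divr_ge0 | apply: Hs_ge0].
set B := _ * Hs _.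
set c := #|minpairs x1 S|.
have cpos : (0 < c)%N by rewrite lt0n hc.
apply: (@le_trans _ _ (c%:R^-1 * \sum_(p in minpairs x1 S) B)).
  rewrite ler_wpM2l // ?invr_ge0 ?ler0n //.
  apply: ler_sum => -[b0 r0] hp.
  have M : minc S (b0, r0).
    move: hp; rewrite inE => /andP[pc /forall_inP hm]; split => // q qc.
    by have := hm q qc; rewrite !pdist1 ler_nat.
  have G := gap IS M.
  have [pc _] := M; rewrite candP in pc; case/and4P: pc => b0S r0S ob0 er0.
  set Bl := [set b in S | odd b] in G B *.
  have b0B : b0 \in Bl by rewrite inE b0S ob0.
  have EB : [set b in S :\ b0 :\ r0 | odd b] = Bl :\ b0.
    apply/setP => z; rewrite !inE; case oz: (odd z); last by rewrite !andbF.
    rewrite !andbT; case: (eqVneq z r0) => [ez|]; last by [].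
    by move: er0; rewrite -ez oz.
  have := cardsD1 b0 Bl; rewrite b0B add1n => Ej.
  have IH' := IH _ (inv_step IS M); rewrite EB in IH'.
  rewrite /B Ej /Hs big_ord_recr /= -/(Hs _) mulrDr pdist1 addrC /=.
  apply: lerD => //.
  move: G; rewrite Ej => G.
  have G' : ((dn b0 r0 * (2 * #|Bl :\ b0|.+1))%:R : R) <= n%:R.
    by rewrite ler_nat mulnCA mulnA.
  rewrite -mulrA -invfM ler_pdivlMr; last by apply: mulr_gt0 => //; rewrite ltr0n.
  by rewrite !natrM in G'.
rewrite sumr_const (_ : #|minpairs x1 S| = c) // -(mulr_natr B) mulrCA mulVf ?mulr1 //.
by rewrite pnatr_eq0 -lt0n.
Qed.

End Real.

Lemma card_odd N : #|[set b : 'I_N | odd b]| = N./2.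
Proof.
rewrite -sum1_card big_mkcond /=.
rewrite (eq_bigr (fun i : 'I_N => (odd i : nat))); last by move=> i _; rewrite inE; case: odd.
elim: N => [|N IH]; first by rewrite big_ord0.
rewrite big_ord_recr /= IH.
have := odd_double_half N; have := odd_double_half N.+1; rewrite /= -!muln2.
case: (odd N) => /=; lia.
Qed.

Lemma ln_step (R : realType) (k : nat) : (0 < k)%N ->
  (k.+1%:R : R)^-1 <= ln (k.+1%:R : R) - ln (k%:R).
Proof.
move=> k0.
have kp : (0 : R) < k%:R by rewrite ltr0n.
have k1p : (0 : R) < k.+1%:R by rewrite ltr0n.
have h : (k%:R : R) <= expR (ln (k.+1%:R : R) - (k.+1%:R)^-1).
  rewrite expRD lnK ?posrE //.
  apply: (@le_trans _ _ (k.+1%:R * (1 - (k.+1%:R)^-1))).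
    rewrite mulrBr mulr1 divff ?pnatr_eq0 // -addn1 natrD addrK //.
  by rewrite ler_wpM2l ?ler0n // expR_ge1Dx.
have : ln (k%:R : R) <= ln (k.+1%:R : R) - (k.+1%:R)^-1.
  by rewrite -[X in _ <= X]expRK ler_ln ?posrE ?expR_gt0.
move: (ln (k.+1%:R : R)) (ln (k%:R : R)) ((k.+1%:R : R)^-1) => a b c h2; lra.
Qed.

Lemma Hs_ln (R : realType) (m : nat) : (0 < m)%N -> Hs R m <= 1 + ln (m%:R : R).
Proof.
case: m => // m _; elim: m => [|m IH].
  by rewrite /Hs big_ord1 ln1 invr1 addr0.
rewrite /Hs big_ord_recr /= -/(Hs R m.+1).
move: (ln_step R (ltn0Sn m)) IH.
move: (ln (m.+2%:R : R)) (ln (m.+1%:R : R)) ((m.+2%:R : R)^-1) (Hs R m.+1) => a b c d; lra.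
Qed.

Theorem lemmaA15 (R : realType) (m : nat) :
  (0 < m)%N ->
  E (n := (2 * m)%N) (fun _ : 'I_(2 * m) => (1 : R))
    <= m%:R * (1 + ln (m%:R : R)).
Proof.
move=> m0.
rewrite /E (eq_bigr (fun _ => D (fun _ : 'I_(2 * m) => (1 : R)))) //.
rewrite sumr_const card_Sn -(mulr_natr (D _)) mulrCA mulVf ?mulr1; last first.
  by rewrite pnatr_eq0 -lt0n fact_gt0.
have I0 : AltInv [set: 'I_(2 * m).+1].
  by apply: inv_init; rewrite oddM.
have := @main R (2 * m) (2 * m).+1 _ I0.
rewrite (_ : [set b in [set: 'I_(2 * m).+1] | odd b] = [set b : 'I_(2 * m).+1 | odd b]); last first.
  by apply/setP => z; rewrite !inE.
rewrite card_odd mul2n /= uphalf_double.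
rewrite (_ : (m.*2)%:R / 2 = m%:R :> R); last first.
  by rewrite -mul2n natrM mulrAC divff ?mul1r // pnatr_eq0.
rewrite -mul2n => h; apply: (le_trans h).
by rewrite ler_wpM2l ?ler0n // Hs_ln.
Qed.
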